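(* For $r\ge 2$, let $H(r)$ be the graph on vertex set $\{1,\dots,2r+4\}$ in which $V_1=\{1,\dots,r+2\}$ and $V_2=\{r+3,\dots,2r+4\}$ each induce a complete graph, and the only edges between $V_1$ and $V_2$ are $\{i,r+2+i\}$ for $i=1,\dots,r$. Then $\operatorname{Z}(H(r))=\overline{\operatorname{Z}}(H(r))=r+2$ and $\underline{z_0}(H(r))=z_0(H(r))=2r+2=\overline{\operatorname{Z}}(H(r))+r$.
   Context: Zero forcing on a graph $G$: starting with a set $S$ of blue vertices (others white), a blue vertex $v$ may change a white vertex $w$ to blue if $w$ is the only white neighbor of $v$. $S$ is a zero forcing set if repeated application colors all of $V(G)$ blue. $\operatorname{Z}(G)$ is the minimum size of a zero forcing set, $\overline{\operatorname{Z}}(G)$ the maximum size of a minimal (under inclusion) zero forcing set. $\mathscr{Z}^{\rm TAR}(G)$ has vertices the zero forcing sets of $G$, two adjacent iff their symmetric difference has size 1; $\mathscr{Z}^{\rm TAR}_k(G)$ is its subgraph induced by zero forcing sets of size at most $k$. $\underline{z_0}(G)$ is the least $k$ with $\mathscr{Z}^{\rm TAR}_k(G)$ connected; $z_0(G)$ is the least $k$ such that $\mathscr{Z}^{\rm TAR}_i(G)$ is connected for every $i=k,\dots,|V(G)|$. *)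

(* Defs.v *)
From mathcomp Require Import all_boot all_order.
Set Implicit Arguments. Unset Strict Implicit. Unset Printing Implicit Defensive.

Section ZeroForcing.
Variables (T : finType) (e : rel T).

Definition nbhd (v : T) : {set T} := [set w | e v w].

Definition force_step (S S' : {set T}) : bool :=
  [exists v, exists w,
     [&& v \in S, w \notin S, e v w,
         nbhd v :\ w \subset S & S' == w |: S]].

Definition zfs (S : {set T}) : bool := connect force_step S setT.

(* Z(G): minimum size of a zero forcing set (V(G) itself is one). *)
Definition Z : nat := \big[minn/#|T|]_(S : {set T} | zfs S) #|S|.

Definition Zbar : nat := \big[maxn/0]_(S : {set T} | minset zfs S) #|S|.

Definition tar_adj (k : nat) (S S' : {set T}) : bool :=
  [&& zfs S, zfs S', #|S| <= k, #|S'| <= k &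
      #|(S :\: S') :|: (S' :\: S)| == 1].

Definition tar_vertex (k : nat) (S : {set T}) : bool := zfs S && (#|S| <= k).

Definition tar_connected (k : nat) : bool :=
  [exists S, tar_vertex k S] &&
  [forall S, forall S', (tar_vertex k S && tar_vertex k S') ==> connect (tar_adj k) S S'].

Definition z0_lower : nat :=
  \big[minn/#|T|]_(k < #|T|.+1 | tar_connected k) (k : nat).

Definition z0 : nat :=
  \big[minn/#|T|]_(k < #|T|.+1 |
     [forall i : 'I_(#|T|.+1), (k <= i) ==> tar_connected i]) (k : nat).

End ZeroForcing.

(* Vertex i : 'I_(2r+4) represents the paper's vertex i+1.
   V1 = {0,...,r+1} (paper: {1,...,r+2}), V2 = {r+2,...,2r+3}
   (paper: {r+3,...,2r+4}); each induces a clique, and the only cross edges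
   are {i, r+2+i} for i = 0,...,r-1 (paper: i = 1,...,r). *)
Definition H_adj (r : nat) : rel 'I_(2 * r + 4) :=
  fun x y =>
    (x != y) &&
    [|| ((x < r + 2) && (y < r + 2)),
        ((r + 2 <= x) && (r + 2 <= y)),
        ((x < r) && (y == x + r + 2 :> nat)) |
        ((y < r) && (x == y + r + 2 :> nat))].
Arguments H_adj r : clear implicits.

(* Main.v *)
Require Import Defs.
From mathcomp Require Import all_boot all_order.
From mathcomp Require Import all_boot all_order zify.
Set Implicit Arguments. Unset Strict Implicit. Unset Printing Implicit Defensive.

Section Gen.
Variables (T : finType) (e : rel T).

Definition fort (F : {set T}) : bool :=
  (F != set0) && [forall v, (v \notin F) ==> (#|nbhd e v :&: F| != 1)].

Lemma force_sub (X Y : {set T}) : force_step e X Y -> X \subset Y.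
Proof.
case/existsP=> v /existsP [w /and5P [_ _ _ _ /eqP ->]]; exact: subsetUr.
Qed.

Lemma connect_sub (X Y : {set T}) : connect (force_step e) X Y -> X \subset Y.
Proof.
case/connectP=> p; elim: p X => [|Z p IH] X /=; first by move=> _ ->.
case/andP=> /force_sub h1 /IH h2 /h2 h3; exact: subset_trans h1 h3.
Qed.

Lemma zfs_fort S F : zfs e S -> fort F -> S :&: F != set0.
Proof.
move=> hz /andP [F0 /forallP hF]; apply/negP => /eqP SF.
have inv : forall X Y, force_step e X Y -> X :&: F = set0 -> Y :&: F = set0.
  move=> X Y /existsP [v /existsP [w /and5P [vX wX evw sub /eqP ->]]] XF.
  have disj : forall x, x \in X -> x \notin F.
    move=> x xX; apply/negP => xF.
    by have := congr1 (fun A : {set T} => x \in A) XF; rewrite !inE xX xF.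
  have vF := disj v vX.
  case wF: (w \in F).
    have := hF v; rewrite vF /= => /negP; case; apply/eqP.
    rewrite (_ : _ :&: _ = [set w]) ?cards1 //; apply/setP => x.
    rewrite !inE; case: (eqVneq x w) => [->|xw]; first by rewrite wF andbT.
    apply/negP => /andP [evx xF].
    have xX : x \in X by apply: (subsetP sub); rewrite !inE xw evx.
    by move: (disj x xX); rewrite xF.
  apply/setP => x; rewrite !inE; apply/negbTE/negP => /andP [/orP [/eqP ->|xX] xF].
    by rewrite wF in xF.
  by move: (disj x xX); rewrite xF.
case/connectP: hz => p; elim: p S SF => [|Y p IH] X /= XF.
  by move=> _ h; rewrite -h setTI in XF; rewrite XF eqxx in F0.
by case/andP=> /inv/(_ XF) YF /IH; apply.
Qed.

Lemma fort_zfs S : (forall F, fort F -> S :&: F != set0) -> zfs e S.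
Proof.
move=> hS.
case: (@arg_maxnP _ S (connect (force_step e) S) (fun X => #|X|) (connect0 _ _)) => C SC Cmax.
have [CT|CT] := eqVneq C setT; first by rewrite /zfs -CT.
have fC : fort (~: C).
  apply/andP; split.
    apply/negP => /eqP h; move/negP: CT; apply; apply/eqP/setP => x.
    by have := congr1 (fun A : {set T} => x \in A) h; rewrite !inE; case: (x \in C).
  apply/forallP => v; apply/implyP; rewrite inE negbK => vC.
  apply/negP => /cards1P [w hw].
  have wn : w \in nbhd e v :&: ~: C by rewrite hw inE.
  move: (wn); rewrite !inE => /andP [evw wC].
  have fs : force_step e C (w |: C).
    apply/existsP; exists v; apply/existsP; exists w.
    rewrite vC wC evw eqxx /= andbT; apply/subsetP => x; rewrite !inE => /andP [xw evx].
    case xC: (x \in C) => //.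
    have : x \in nbhd e v :&: ~: C by rewrite !inE evx xC.
    by rewrite hw inE (negbTE xw).
  have := Cmax (w |: C) (connect_trans SC (connect1 fs)).
  rewrite /geq cardsU1 wC /=; lia.
have := hS _ fC; have := connect_sub SC => /subsetP sub.
case/set0Pn => x; rewrite !inE => /andP [xS xC].
by move: xC; rewrite (sub x xS).
Qed.

Lemma zfsE S : zfs e S <-> (forall F, fort F -> S :&: F != set0).
Proof. split; [move=> h F; exact: zfs_fort | exact: fort_zfs]. Qed.

Lemma zfs_mono (S S' : {set T}) : zfs e S -> S \subset S' -> zfs e S'.
Proof.
move=> /zfsE h /subsetP sub; apply/zfsE => F /h /set0Pn [x].
by rewrite inE => /andP [xS xF]; apply/set0Pn; exists x; rewrite inE sub.
Qed.

Lemma tar_sym k : symmetric (tar_adj e k).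
Proof.
move=> X Y; rewrite /tar_adj setUC.
by case: (zfs e X); case: (zfs e Y); case: (#|X| <= k); case: (#|Y| <= k).
Qed.

Lemma tar_up k n (X Y : {set T}) : #|Y :\: X| = n -> zfs e X -> X \subset Y -> #|Y| <= k ->
  connect (tar_adj e k) X Y.
Proof.
elim: n X => [|n IH] X hn zX XY Yk.
  have : Y \subset X by rewrite -setD_eq0 -cards_eq0 hn.
  by move=> YX; rewrite (eqP (_ : X == Y)) ?connect0 // eqEsubset XY YX.
have : 0 < #|Y :\: X| by rewrite hn.
case/card_gt0P => y; rewrite inE => /andP [yX yY].
have XY' : y |: X \subset Y by rewrite subUset sub1set yY XY.
have zX' : zfs e (y |: X) by apply: zfs_mono zX _; exact: subsetUr.
apply: (connect_trans (connect1 _)); last first.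
  apply: (IH (y |: X)) => //.
  have := cardsD1 y (Y :\: X); rewrite inE yX yY hn add1n => [[->]].
  by apply: eq_card => z; rewrite !inE; case: (z == y); rewrite ?andbF ?andbT.
rewrite /tar_adj zX zX' (leq_trans (subset_leq_card XY) Yk) (leq_trans (subset_leq_card XY') Yk) /=.
rewrite (_ : _ :|: _ = [set y]) ?cards1 //; apply/setP => z; rewrite !inE.
by case: (eqVneq z y) => [->|]; rewrite ?(negbTE yX) //=; case: (z \in X).
Qed.

Lemma tar_sub k (X Y : {set T}) : zfs e X -> X \subset Y -> #|Y| <= k -> connect (tar_adj e k) X Y.
Proof. exact: tar_up. Qed.

Lemma tar_join k (X Y : {set T}) : zfs e X -> zfs e Y -> #|X :|: Y| <= k -> connect (tar_adj e k) X Y.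
Proof.
move=> zX zY h; apply: (connect_trans (tar_sub zX (subsetUl X Y) h)).
rewrite (sym_connect_sym (@tar_sym k)).
exact: tar_sub zY (subsetUr X Y) h.
Qed.
End Gen.

Lemma card_pred n (P : pred nat) : #|[set x : 'I_n | P x]| = count P (iota 0 n).
Proof.
rewrite cardsE cardE /enum_mem size_filter -val_enum_ord count_map -enumT.
by apply: eq_count => x.
Qed.

Lemma count_rec (P : pred nat) (f : nat -> nat) m :
  f 0 = 0 -> (forall i, f i.+1 = f i + P i) -> count P (iota 0 m) = f m.
Proof.
move=> f0 fS; elim: m => [|m IH] //.
by rewrite -addn1 iotaD count_cat /= IH addn1 fS addn0.
Qed.

Section Gen2.
Variables (T : finType) (e : rel T).

Lemma fort_second F v w : fort e F -> v \notin F -> w \in F -> e v w ->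
  exists x, [/\ x \in F, e v x & x != w].
Proof.
move=> /andP [_ /forallP hF] vF wF evw.
have [/existsP [x /and3P [xF evx xw]]|nex] := boolP [exists x, [&& x \in F, e v x & x != w]].
  by exists x.
have := hF v; rewrite vF /= => /negP; case; apply/eqP.
rewrite (_ : _ :&: _ = [set w]) ?cards1 //; apply/setP => x; rewrite !inE.
case: (eqVneq x w) => [->|xw]; first by rewrite evw wF.
apply/negbTE/negP => /andP [evx xF]; move/negP: nex; apply.
by apply/existsP; exists x; rewrite xF evx xw.
Qed.

Lemma fort_intro F : F != set0 ->
  (forall v, v \notin F -> (forall x, e v x -> x \notin F) \/
     exists x y, [/\ e v x, e v y, x \in F, y \in F & x != y]) -> fort e F.
Proof.
move=> F0 h; apply/andP; split => //; apply/forallP => v; apply/implyP => vF.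
apply/negP => /cards1P [z hz].
have zin : z \in nbhd e v :&: F by rewrite hz inE.
case: (h v vF) => [h1|[x [y [evx evy xF yF xy]]]].
  by move: zin; rewrite !inE => /andP [/h1 /negP].
have : x \in nbhd e v :&: F by rewrite !inE evx xF.
have : y \in nbhd e v :&: F by rewrite !inE evy yF.
by rewrite hz !inE => /eqP yz /eqP xz; rewrite xz yz eqxx in xy.
Qed.

Lemma symdiff1 (X Y : {set T}) : #|(X :\: Y) :|: (Y :\: X)| == 1 ->
  X \subset Y \/ Y \subset X.
Proof.
case/cards1P => z hz.
have D : forall u, ((u \notin Y) && (u \in X)) || ((u \notin X) && (u \in Y)) = (u == z).
  by move=> u; have := congr1 (fun A : {set T} => u \in A) hz; rewrite !inE.
case zX: (z \in X).
  right; apply/subsetP => y yY; case yX: (y \in X) => //.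
  by have := D y; rewrite yY yX /= => /esym /eqP yz; rewrite -yz yX in zX.
left; apply/subsetP => x xX; case xY: (x \in Y) => //.
by have := D x; rewrite xX xY /= => /esym /eqP xz; rewrite -xz xX in zX.
Qed.
End Gen2.

Section H.
Variable r : nat.
Hypothesis r2 : 2 <= r.
Local Notation T := ('I_(2 * r + 4)).
Local Notation e := (H_adj r).

Lemma HadjP (x y : T) : H_adj r x y =
    ((x:nat) != y) &&
    [|| ((x < r + 2) && (y < r + 2)),
        ((r + 2 <= x) && (r + 2 <= y)),
        ((x < r) && (y == x + r + 2 :> nat)) |
        ((y < r) && (x == y + r + 2 :> nat))].
Proof. by []. Qed.

Lemma neqv (x y : T) : (x != y) = ((x:nat) != y).
Proof. by []. Qed.

Lemma adjV1 (x y : T) : (x:nat) != y -> x < r + 2 -> y < r + 2 -> e x y.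
Proof. by move=> h1 h2 h3; rewrite HadjP h1 h2 h3. Qed.

Lemma adjV2 (x y : T) : (x:nat) != y -> r + 2 <= x -> r + 2 <= y -> e x y.
Proof. by move=> h1 h2 h3; rewrite HadjP h1 h2 h3 /= orbT. Qed.

Lemma ex_ord k : k < 2 * r + 4 -> exists o : T, (o : nat) = k.
Proof. by move=> h; exists (Ordinal h). Qed.

Lemma memneq (A : {set T}) (x y : T) : x \in A -> y \notin A -> (x:nat) != y.
Proof. by move=> xA yA; apply/eqP => /val_inj h; rewrite -h xA in yA. Qed.

Definition ivl lo hi : {set T} := [set x : T | lo <= x < hi].

Lemma card_ivl lo hi : lo <= hi -> hi <= 2 * r + 4 -> #|ivl lo hi| = hi - lo.
Proof.
move=> h1 h2; rewrite /ivl (@card_pred _ (fun x => lo <= x < hi)) (@count_rec _ (fun m => minn hi m - lo)) /=.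
  by rewrite (minn_idPl h2).
  by rewrite minn0.
by move=> i; lia.
Qed.

Definition V1 := ivl 0 (r + 2).
Definition V2 := ivl (r + 2) (2 * r + 4).
Definition A1 := ivl r (r + 2).
Definition B2 := ivl (2 * r + 2) (2 * r + 4).

Lemma cardV1 : #|V1| = r + 2.
Proof. by rewrite card_ivl //; lia. Qed.
Lemma cardV2 : #|V2| = r + 2.
Proof. rewrite card_ivl //; lia. Qed.

Lemma le1 (S V : {set T}) : #|V| = r + 2 -> r + 1 <= #|S :&: V| ->
  forall x y, x \in V -> y \in V -> x \notin S -> y \notin S -> x = y.
Proof.
move=> cV h x y xV yV xS yS.
have := cardsID S V; rewrite cV setIC => hc.
have : #|V :\: S| <= 1 by lia.
move/card_le1P => h1.
have xD : x \in V :\: S by rewrite inE xS xV.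
have yD : y \in V :\: S by rewrite inE yS yV.
by have := h1 x xD y; rewrite yD inE => /esym /eqP.
Qed.

Lemma ge2 (S V : {set T}) : #|V| = r + 2 -> #|S :&: V| <= r ->
  exists x y, [/\ x \in V, y \in V, x \notin S, y \notin S & (x:nat) != y].
Proof.
move=> cV h.
have := cardsID S V; rewrite cV setIC => hc.
have : 1 < #|V :\: S| by lia.
case/card_gt1P => x [y [xD yD xy]]; move: xD yD; rewrite !inE => /andP [xS xV] /andP [yS yV].
by exists x, y.
Qed.

Definition typ (V B S : {set T}) := (r + 1 <= #|S :&: V|) && (S :&: B != set0).
Definition type1 := typ V1 B2.
Definition type2 := typ V2 A1.

Lemma ordlt (x : T) : (x : nat) < 2 * r + 4.
Proof. exact: ltn_ord. Qed.

Lemma type1_zfs S : type1 S -> zfs e S.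
Proof.
case/andP => cS /set0Pn [beta]; rewrite !inE => /andP [bS bB].
apply/zfsE => F fF; apply/negP => /eqP SF.
have disj : forall x, x \in F -> x \notin S.
  move=> x xF; apply/negP => xS.
  by have := congr1 (fun A : {set T} => x \in A) SF; rewrite !inE xS xF.
have u1 := le1 cardV1 cS.
have step1 : forall w, w \in F -> r + 2 <= w.
  move=> w wF; case: (leqP (r + 2) w) => // wlt.
  have hk : (if (w:nat) == r then r + 1 else r) < 2 * r + 4 by case: ifP; lia.
  have [al hal] := ex_ord hk.
  have wV : w \in V1 by rewrite inE; lia.
  have alV : al \in V1 by rewrite inE hal; case: ifP; lia.
  have alF : al \notin F.
    apply/negP => alF.
    have h := u1 al w alV wV (disj _ alF) (disj _ wF).
    by move: hal; rewrite h; case: ifP; lia.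
  have eaw : e al w by rewrite HadjP hal; case: ifP; lia.
  have [x [xF eax xw]] := fort_second fF alF wF eaw.
  move: eax; rewrite HadjP hal => eax.
  have xV : x \in V1 by rewrite inE; move: eax; case: ifP; lia.
  have h := u1 x w xV wV (disj _ xF) (disj _ wF).
  by rewrite h eqxx in xw.
have step2 : forall x, x \in F -> 2 * r + 2 <= x.
  move=> x xF; case: (leqP (2 * r + 2) x) => // xlt.
  have x1 := step1 x xF.
  have [y hy] := @ex_ord (x - r - 2) ltac:(lia).
  have yF : y \notin F by apply/negP => /step1; lia.
  have eyx : e y x by rewrite HadjP hy; lia.
  have [z [zF eyz zx]] := fort_second fF yF xF eyx.
  have z1 := step1 z zF.
  by move: eyz zx; rewrite HadjP hy -val_eqE /=; lia.
case/andP: (fF) => /set0Pn [f fin] _.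
have bF : beta \notin F by apply/negP => /disj; rewrite bS.
have ebf : e beta f.
  rewrite HadjP; have := step2 f fin; have := memneq fin bF; move: bB; lia.
have [z [zF ebz zf]] := fort_second fF bF fin ebf.
have := step2 z zF; have := step2 f fin; have := ordlt z; have := ordlt f; have := ordlt beta.
have := memneq fin bF; move: ebz zf bB; rewrite HadjP -val_eqE /=; lia.
Qed.

Lemma type2_zfs S : type2 S -> zfs e S.
Proof.
case/andP => cS /set0Pn [beta]; rewrite !inE => /andP [bS bB].
apply/zfsE => F fF; apply/negP => /eqP SF.
have disj : forall x, x \in F -> x \notin S.
  move=> x xF; apply/negP => xS.
  by have := congr1 (fun A : {set T} => x \in A) SF; rewrite !inE xS xF.
have u1 := le1 cardV2 cS.
have step1 : forall w, w \in F -> w < r + 2.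
  move=> w wF; case: (leqP (r + 2) w) => // wlt.
  have hk : (if (w:nat) == 2 * r + 2 then 2 * r + 3 else 2 * r + 2) < 2 * r + 4 by case: ifP; lia.
  have [al hal] := ex_ord hk.
  have wV : w \in V2 by rewrite inE; have := ordlt w; lia.
  have alV : al \in V2 by rewrite inE hal; case: ifP; lia.
  have alF : al \notin F.
    apply/negP => alF.
    have h := u1 al w alV wV (disj _ alF) (disj _ wF).
    by move: hal; rewrite h; case: ifP; lia.
  have eaw : e al w by rewrite HadjP hal; case: ifP; lia.
  have [x [xF eax xw]] := fort_second fF alF wF eaw.
  move: eax; rewrite HadjP hal => eax.
  have xV : x \in V2 by rewrite inE; have := ordlt x; move: eax; case: ifP; lia.
  have h := u1 x w xV wV (disj _ xF) (disj _ wF).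
  by rewrite h eqxx in xw.
have step2 : forall x, x \in F -> r <= x.
  move=> x xF; case: (leqP r x) => // xlt.
  have [y hy] := @ex_ord (x + r + 2) ltac:(lia).
  have yF : y \notin F by apply/negP => /step1; lia.
  have eyx : e y x by rewrite HadjP hy; lia.
  have [z [zF eyz zx]] := fort_second fF yF xF eyx.
  have z1 := step1 z zF.
  by move: eyz zx; rewrite HadjP hy -val_eqE /=; lia.
case/andP: (fF) => /set0Pn [f fin] _.
have bF : beta \notin F by apply/negP => /disj; rewrite bS.
have ebf : e beta f.
  rewrite HadjP; have := step2 f fin; have := step1 f fin; have := memneq fin bF; move: bB; lia.
have [z [zF ebz zf]] := fort_second fF bF fin ebf.
have := step2 z zF; have := step1 z zF; have := step2 f fin; have := step1 f fin.
have := memneq fin bF; move: ebz zf bB; rewrite HadjP -val_eqE /=; lia.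
Qed.

Lemma zfs_type S : zfs e S -> type1 S || type2 S.
Proof.
move=> zS; apply/negPn/negP; rewrite negb_or => /andP [n1 n2].
have hb2 : 2 * r + 2 < 2 * r + 4 by lia.
have hb3 : 2 * r + 3 < 2 * r + 4 by lia.
have ha0 : r < 2 * r + 4 by lia.
have ha1 : r + 1 < 2 * r + 4 by lia.
have [o2 ho2] := ex_ord hb2; have [o3 ho3] := ex_ord hb3.
have [p0 hp0] := ex_ord ha0; have [p1 hp1] := ex_ord ha1.
have [Sb|Sb] := eqVneq (S :&: B2) set0.
  have fB : fort e B2.
    apply: fort_intro; first by apply/set0Pn; exists o2; rewrite inE ho2; lia.
    move=> v; rewrite inE => vB; case: (leqP (r + 2) v) => vl.
      right; exists o2, o3; rewrite !inE !HadjP -val_eqE ho2 ho3 /=.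
      have := ordlt v; move: vB => vB hv; split; lia.
    left => x; rewrite HadjP inE; lia.
  by have := zfs_fort zS fB; rewrite Sb eqxx.
have [Sa|Sa] := eqVneq (S :&: A1) set0.
  have fA : fort e A1.
    apply: fort_intro; first by apply/set0Pn; exists p0; rewrite inE hp0; lia.
    move=> v; rewrite inE => vA; case: (leqP r v) => vl.
      left => x; rewrite HadjP inE; move: vA; lia.
    right; exists p0, p1; rewrite !inE !HadjP -val_eqE hp0 hp1 /=; split; lia.
  by have := zfs_fort zS fA; rewrite Sa eqxx.
have c1 : #|S :&: V1| <= r.
  by move: n1; rewrite /type1 /typ Sb andbT => h; rewrite leqNgt -addn1; exact: h.
have c2 : #|S :&: V2| <= r.
  by move: n2; rewrite /type2 /typ Sa andbT => h; rewrite leqNgt -addn1; exact: h.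
have [x1 [y1 [x1V y1V x1S y1S xy1]]] := ge2 cardV1 c1.
have [x2 [y2 [x2V y2V x2S y2S xy2]]] := ge2 cardV2 c2.
have fC : fort e (~: S).
  apply: fort_intro; first by apply/set0Pn; exists x1; rewrite inE.
  move=> v; rewrite inE negbK => vS; right.
  move: x1V y1V x2V y2V; rewrite !inE => x1V y1V x2V y2V.
  case: (leqP (r + 2) v) => vl.
    exists x2, y2; rewrite !inE x2S y2S neqv; split => //.
      by apply: adjV2; [exact: memneq vS x2S | exact: vl | case/andP: x2V].
    by apply: adjV2; [exact: memneq vS y2S | exact: vl | case/andP: y2V].
  exists x1, y1; rewrite !inE x1S y1S neqv; split => //.
    by apply: adjV1; [exact: memneq vS x1S | exact: vl | case/andP: x1V].
  by apply: adjV1; [exact: memneq vS y1S | exact: vl | case/andP: y1V].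
by have := zfs_fort zS fC; rewrite setICr eqxx.
Qed.

Lemma zfsT S : zfs e S = type1 S || type2 S.
Proof.
apply/idP/idP; first exact: zfs_type.
by case/orP; [exact: type1_zfs | exact: type2_zfs].
Qed.

Section Typ.
Variables (V B : {set T}).
Hypothesis VB : forall x, x \in B -> x \notin V.

Lemma typ_mono (S S' : {set T}) : S \subset S' -> typ V B S -> typ V B S'.
Proof.
move=> sub /andP [c /set0Pn [b]]; rewrite inE => /andP [bS bB].
apply/andP; split.
  by apply: leq_trans c _; apply: subset_leq_card; apply: setSI.
by apply/set0Pn; exists b; rewrite inE bB (subsetP sub).
Qed.

Lemma typ_card S : typ V B S -> r + 2 <= #|S|.
Proof.
case/andP => c /set0Pn [b]; rewrite inE => /andP [bS bB].
have : S :&: V \proper S.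
  apply/properP; split; first exact: subsetIl.
  by exists b => //; rewrite inE (negbTE (VB bB)) andbF.
move/proper_card; lia.
Qed.

Lemma shrink S : #|V| = r + 2 -> typ V B S -> r + 3 <= #|S| ->
  exists2 v, v \in S & typ V B (S :\ v).
Proof.
move=> cV /andP [c /set0Pn [b]]; rewrite inE => /andP [bS bB] cS.
case: (leqP (r + 2) #|S :&: V|) => h.
  have : 0 < #|S :&: V| by lia.
  case/card_gt0P => v vSV; exists v; first by move: vSV; rewrite inE => /andP [].
  have vV : v \in V by move: vSV; rewrite inE => /andP [].
  apply/andP; split.
    have := cardsD1 v (S :&: V); rewrite vSV => hc.
    have : (S :&: V) :\ v \subset (S :\ v) :&: V.
      by apply/subsetP => x; rewrite !inE => /and3P [-> -> ->].
    move/subset_leq_card; lia.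
  apply/set0Pn; exists b; rewrite !inE bS bB !andbT.
  by apply/eqP => bv; move: (VB bB); rewrite bv vV.
have := cardsID V S => hc.
have : 1 < #|S :\: V| by lia.
case/card_gt1P => x [y [xD yD xy]].
move: xD yD; rewrite !inE => /andP [xV xS] /andP [yV yS].
exists (if x \in B then y else x); first by case: ifP.
apply/andP; split.
  apply: leq_trans c _; apply: subset_leq_card; apply/subsetP => z; rewrite !inE.
  case/andP => zS zV; rewrite zS zV !andbT.
  by case: ifP => _; apply/eqP => h'; [move: yV | move: xV]; rewrite -h' zV.
apply/set0Pn; exists (if x \in B then x else b); rewrite !inE.
case xB: (x \in B); first by rewrite xB xS /= xy.
by rewrite bS bB !andbT; apply/eqP => h'; move: bB; rewrite h' xB.
Qed.
End Typ.

Lemma both_card S : type1 S -> type2 S -> 2 * r + 2 <= #|S|.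
Proof.
case/andP => c1 _ /andP [c2 _].
have := cardsID V1 S => hc.
have : S :&: V2 \subset S :\: V1.
  apply/subsetP => x; rewrite !inE => /andP [-> h]; rewrite andbT; lia.
move/subset_leq_card; lia.
Qed.

Definition C1 : {set T} := [set x : T | (x <= r) || (x == 2 * r + 2 :> nat)].
Definition C2 : {set T} := [set x : T | (x == r :> nat) || ((r + 2 <= x) && (x <= 2 * r + 2))].
Definition U1 : {set T} := [set x : T | (x < r + 2) || (2 * r + 2 <= x)].
Definition U2 : {set T} := [set x : T | r <= x].
Definition W : {set T} := [set x : T | (x != r + 1 :> nat) && (x != 2 * r + 3 :> nat)].

Lemma cardC1 : #|C1| = r + 2.
Proof.
rewrite /C1 (@card_pred _ (fun x => (x <= r) || (x == 2 * r + 2)))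
  (@count_rec _ (fun m => minn m (r + 1) + (2 * r + 2 < m))); [lia|lia|by move=> i; lia].
Qed.

Lemma cardC2 : #|C2| = r + 2.
Proof.
rewrite /C2 (@card_pred _ (fun x => (x == r) || ((r + 2 <= x) && (x <= 2 * r + 2))))
  (@count_rec _ (fun m => (r < m) + (minn m (2 * r + 3) - (r + 2)))); [lia|lia|by move=> i; lia].
Qed.

Lemma cardU1 : #|U1| = r + 4.
Proof.
rewrite /U1 (@card_pred _ (fun x => (x < r + 2) || (2 * r + 2 <= x)))
  (@count_rec _ (fun m => minn m (r + 2) + (m - (2 * r + 2)))); [lia|lia|by move=> i; lia].
Qed.

Lemma cardU2 : #|U2| = r + 4.
Proof.
rewrite /U2 (@card_pred _ (fun x => r <= x)) (@count_rec _ (fun m => m - r)); [lia|lia|by move=> i; lia].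
Qed.

Lemma cardW : #|W| = 2 * r + 2.
Proof.
rewrite /W (@card_pred _ (fun x => (x != r + 1) && (x != 2 * r + 3)))
  (@count_rec _ (fun m => m - (r + 1 < m) - (2 * r + 3 < m))); [lia|lia|by move=> i; lia].
Qed.

Lemma ivl_card_sub lo hi (A : {set T}) : lo <= hi -> hi <= 2 * r + 4 ->
  (forall x : T, lo <= x < hi -> x \in A) -> hi - lo <= #|A|.
Proof.
move=> h1 h2 h; rewrite -card_ivl //; apply: subset_leq_card; apply/subsetP => x.
by rewrite inE => /h.
Qed.

Lemma type1C1 : type1 C1.
Proof.
apply/andP; split.
  have := @ivl_card_sub 0 (r + 1) (C1 :&: V1) isT ltac:(lia).
  by rewrite subn0; apply => x hx; rewrite !inE; lia.
have [o ho] := @ex_ord (2 * r + 2) ltac:(lia).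
by apply/set0Pn; exists o; rewrite !inE ho; lia.
Qed.

Lemma type2C2 : type2 C2.
Proof.
apply/andP; split.
  have := @ivl_card_sub (r + 2) (2 * r + 3) (C2 :&: V2) ltac:(lia) ltac:(lia).
  have -> : 2 * r + 3 - (r + 2) = r + 1 by lia.
  by apply => x hx; rewrite !inE; lia.
have [o ho] := @ex_ord r ltac:(lia).
by apply/set0Pn; exists o; rewrite !inE ho; lia.
Qed.

Lemma type1W : type1 W.
Proof.
apply/andP; split.
  have := @ivl_card_sub 0 (r + 1) (W :&: V1) isT ltac:(lia).
  by rewrite subn0; apply => x hx; rewrite !inE; lia.
have [o ho] := @ex_ord (2 * r + 2) ltac:(lia).
by apply/set0Pn; exists o; rewrite !inE ho; lia.
Qed.

Lemma conn_typ (V B U C : {set T}) k S :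
  (forall x, x \in V -> x \in U) -> (forall x, x \in B -> x \in U) ->
  C \subset U -> C \subset W -> zfs e C -> #|U| <= k -> #|W| <= k ->
  (forall X, typ V B X -> zfs e X) -> typ V B S -> #|S| <= k ->
  connect (tar_adj e k) S W.
Proof.
move=> VU BU CU CW zC hU hW tz tS hS.
have tS1 : typ V B (S :&: U).
  case/andP: tS => c /set0Pn [b]; rewrite inE => /andP [bS bB].
  apply/andP; split.
    apply: leq_trans c _; apply: subset_leq_card; apply/subsetP => x.
    by rewrite !inE => /andP [-> xV]; rewrite xV (VU _ xV).
  by apply/set0Pn; exists b; rewrite !inE bS bB (BU _ bB).
have zS1 := tz _ tS1.
apply: (connect_trans (y := S :&: U)).
  rewrite (sym_connect_sym (@tar_sym _ e k)).
  exact: tar_sub zS1 (subsetIl S U) hS.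
apply: (connect_trans (y := C)).
  apply: tar_join zS1 zC _; apply: leq_trans hU; apply: subset_leq_card.
  by rewrite subUset CU subIset // subxx orbT.
exact: tar_sub zC CW hW.
Qed.

Lemma conn_big k : 2 * r + 2 <= k -> tar_connected e k.
Proof.
move=> hk.
have zW : zfs e W by apply: type1_zfs; exact: type1W.
have toW : forall S, tar_vertex e k S -> connect (tar_adj e k) S W.
  move=> S /andP [zS cS]; move: zS; rewrite zfsT => /orP [t1|t2].
    apply: (conn_typ (V := V1) (B := B2) (U := U1) (C := C1)) => //.
    - by move=> x; rewrite !inE; lia.
    - by move=> x; rewrite !inE; lia.
    - by apply/subsetP => x; rewrite !inE; lia.
    - by apply/subsetP => x; rewrite !inE; lia.
    - by apply: type1_zfs; exact: type1C1.
    - by rewrite cardU1; lia.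
    - by rewrite cardW.
    - exact: type1_zfs.
  apply: (conn_typ (V := V2) (B := A1) (U := U2) (C := C2)) => //.
  - by move=> x; rewrite !inE; lia.
  - by move=> x; rewrite !inE; lia.
  - by apply/subsetP => x; rewrite !inE; lia.
  - by apply/subsetP => x; rewrite !inE; lia.
  - by apply: type2_zfs; exact: type2C2.
  - by rewrite cardU2; lia.
  - by rewrite cardW.
  - exact: type2_zfs.
apply/andP; split.
  by apply/existsP; exists W; rewrite /tar_vertex zW cardW.
apply/forallP => S; apply/forallP => S'; apply/implyP => /andP [vS vS'].
apply: connect_trans (toW _ vS) _.
by rewrite (sym_connect_sym (@tar_sym _ e k)); apply: toW.
Qed.

Lemma inv_type1 k X Y : k <= 2 * r + 1 -> connect (tar_adj e k) X Y -> type1 X -> type1 Y.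
Proof.
move=> hk /connectP [p]; elim: p X => [|Z p IH] X /=; first by move=> _ ->.
case/andP => hXZ hp hl t1; apply: (IH Z hp hl).
case/and5P: hXZ => zX zZ cX cZ /symdiff1 [sub|sub].
  exact: typ_mono sub t1.
move: (zZ); rewrite zfsT => /orP [//|t2].
have := leq_trans (both_card t1 (typ_mono sub t2)) cX; lia.
Qed.

Lemma not_conn k : k <= 2 * r + 1 -> ~~ tar_connected e k.
Proof.
move=> hk; apply/negP => /andP [/existsP [S /andP [zS cS]] /forallP h].
have zC1 : zfs e C1 by apply: type1_zfs; exact: type1C1.
have zC2 : zfs e C2 by apply: type2_zfs; exact: type2C2.
have := h C1 => /forallP /(_ C2) /implyP.
move: zS; rewrite zfsT => /orP [t|t].
  have := @typ_card V1 B2 ltac:(by move=> x; rewrite !inE; lia) S t => hs.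
  rewrite /tar_vertex zC1 zC2 cardC1 cardC2 /=.
  have -> : r + 2 <= k by apply: leq_trans hs cS.
  move=> /(_ isT) /(inv_type1 hk) /(_ type1C1) t1.
  have := both_card t1 type2C2; rewrite cardC2; lia.
have := @typ_card V2 A1 ltac:(by move=> x; rewrite !inE; lia) S t => hs.
rewrite /tar_vertex zC1 zC2 cardC1 cardC2 /=.
have -> : r + 2 <= k by apply: leq_trans hs cS.
move=> /(_ isT) /(inv_type1 hk) /(_ type1C1) t1.
have := both_card t1 type2C2; rewrite cardC2; lia.
Qed.
End H.

Lemma bigmin_le (I : finType) (P : pred I) (F : I -> nat) x0 i :
  P i -> \big[minn/x0]_(j | P j) F j <= F i.
Proof.
move=> Pi; rewrite unlock; elim: (index_enum I) (mem_index_enum i) => //= j s IH.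
rewrite inE; case/orP=> [/eqP<-|/IH h]; first by rewrite Pi geq_minl.
by case: (P j) => //; rewrite geq_min h orbT.
Qed.

Section Final.
Variable r : nat.
Hypothesis r2 : 2 <= r.

Lemma zfs_card S : zfs (H_adj r) S -> r + 2 <= #|S|.
Proof.
rewrite (zfsT r2) => /orP [t|t].
  by apply: (@typ_card r r2 (V1 r) (B2 r)) t => x; rewrite !inE; lia.
by apply: (@typ_card r r2 (V2 r) (A1 r)) t => x; rewrite !inE; lia.
Qed.

Lemma zC1 : zfs (H_adj r) (C1 r).
Proof. by apply: (type1_zfs r2); exact: type1C1. Qed.

Lemma minC1 : minset (zfs (H_adj r)) (C1 r).
Proof.
apply/minsetP; split; first exact: zC1.
move=> B zB sub; apply/eqP; rewrite eqEcard sub (cardC1 r2) /=.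
exact: zfs_card.
Qed.

Lemma minset_card S : minset (zfs (H_adj r)) S -> #|S| <= r + 2.
Proof.
case/minsetP => zS hmin; case: (leqP #|S| (r + 2)) => // hc.
have hc' : r + 3 <= #|S| by lia.
move: (zS); rewrite (zfsT r2) => /orP [t|t].
  have [v vS tv] := @shrink r r2 (V1 r) (B2 r) ltac:(by move=> x; rewrite !inE; lia) S (cardV1 r2) t hc'.
  have := hmin _ (type1_zfs r2 tv) (subsetDl S [set v]).
  move=> h; have : v \in S :\ v by rewrite h.
  by rewrite !inE eqxx.
have [v vS tv] := @shrink r r2 (V2 r) (A1 r) ltac:(by move=> x; rewrite !inE; lia) S (cardV2 r2) t hc'.
have := hmin _ (type2_zfs r2 tv) (subsetDl S [set v]).
move=> h; have : v \in S :\ v by rewrite h.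
by rewrite !inE eqxx.
Qed.

Lemma conn_ge k : tar_connected (H_adj r) k -> 2 * r + 2 <= k.
Proof.
move=> h; case: (leqP (2 * r + 2) k) => // hk.
by have := not_conn r2 (k := k) ltac:(lia); rewrite h.
Qed.
End Final.

Theorem proposition3p4 (r : nat) : 2 <= r ->
  [/\ Z (H_adj r) = r + 2,
      Zbar (H_adj r) = r + 2,
      z0_lower (H_adj r) = 2 * r + 2,
      z0 (H_adj r) = 2 * r + 2 &
      2 * r + 2 = Zbar (H_adj r) + r].
Proof.
move=> r2.
have hZ : Z (H_adj r) = r + 2.
  rewrite /Z; apply/eqP; rewrite eqn_leq; apply/andP; split.
    by apply: (@leq_trans #|C1 r|); [exact: bigmin_le (zC1 r2) | rewrite (cardC1 r2)].
  apply: (big_ind (fun m => r + 2 <= m)).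
  - by rewrite card_ord; lia.
  - by move=> x y hx hy; rewrite leq_min hx hy.
  - by move=> S; exact: zfs_card.
have hZb : Zbar (H_adj r) = r + 2.
  rewrite /Zbar; apply/eqP; rewrite eqn_leq; apply/andP; split.
    apply: (big_ind (fun m => m <= r + 2)) => //.
    - by move=> x y hx hy; rewrite geq_max hx hy.
    - by move=> S; exact: minset_card.
  by rewrite (bigD1 (C1 r)) /= ?(cardC1 r2) ?leq_maxl //; exact: minC1.
have hT : 2 * r + 2 < #|'I_(2 * r + 4)|.+1 by rewrite card_ord; lia.
have hz0 : z0_lower (H_adj r) = 2 * r + 2.
  rewrite /z0_lower; apply/eqP; rewrite eqn_leq; apply/andP; split.
    apply: (@leq_trans (Ordinal hT : nat)) => //; apply: bigmin_le.
    exact: (conn_big r2).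
  apply: (big_ind (fun m => 2 * r + 2 <= m)).
  - by rewrite card_ord; lia.
  - by move=> x y hx hy; rewrite leq_min hx hy.
  - by move=> k; exact: conn_ge.
have hz : z0 (H_adj r) = 2 * r + 2.
  rewrite /z0; apply/eqP; rewrite eqn_leq; apply/andP; split.
    apply: (@leq_trans (Ordinal hT : nat)) => //; apply: bigmin_le.
    apply/forallP => i; apply/implyP => hi; exact: (conn_big r2).
  apply: (big_ind (fun m => 2 * r + 2 <= m)).
  - by rewrite card_ord; lia.
  - by move=> x y hx hy; rewrite leq_min hx hy.
  - move=> k /forallP /(_ k) /implyP /(_ (leqnn _)); exact: conn_ge.
split => //; lia.
Qed.
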